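(* Let $B:\mathbb{N}\to(0,\infty)$ and let $(p_N)_{N\in\mathbb{N}}$ be a sequence of monic univariate complex polynomials, $p_N$ of degree $N$, with $\mu_{\rm norm}(p_N)\le B(N)$ for all $N$. Let $\omega_N=\{x_1,\dots,x_N\}\subset\mathbb{S}^2$ be the points with $\pi_{\mathbb{S}^2}(x_i)=z_i$, $z_1,\dots,z_N$ the roots of $p_N$. Then $$\mathcal{E}_{\log}(\omega_N)\le \kappa N^2-N\log\Big(\frac{\sqrt{N(N+1)}}{2}\Big)+N\log B(N),$$ where $\kappa=\frac12-\log 2$.
   Context: $\mathbb{S}^2\subset\mathbb{R}^3$ is the unit sphere; $\pi_{\mathbb{S}^2}(a,b,c)=\frac{a+ib}{1-c}$ is the stereographic projection from the North pole. $\mathcal{E}_{\log}(\{x_1,\dots,x_N\})=-\sum_{i\ne j}\log\|x_i-x_j\|$. Bombieri–Weyl norm: $\|\sum_{i=0}^N a_iz^i\|=(\sum_i\binom{N}{i}^{-1}|a_i|^2)^{1/2}$. For a root $z$ of a degree-$N$ polynomial $P$, $\mu_{\rm norm}(P,z)=N^{1/2}\|P\|(1+|z|^2)^{N/2-1}/|P'(z)|$ ($=\infty$ at multiple roots) and $\mu_{\rm norm}(P)=\max_{P(z)=0}\mu_{\rm norm}(P,z)$. Note $\kappa=\int\int\log|x-y|^{-1}d\sigma(x)d\sigma(y)$ with $\sigma$ the normalized surface measure on $\mathbb{S}^2$. *)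

(* Defs.v *)
From Stdlib Require Import Reals List.
Open Scope R_scope.

Definition Cpx : Type := (R * R)%type.
Definition Cre (z : Cpx) : R := fst z.
Definition Cim (z : Cpx) : R := snd z.
Definition C0 : Cpx := (0, 0).
Definition C1 : Cpx := (1, 0).
Definition Cadd (z w : Cpx) : Cpx := (Cre z + Cre w, Cim z + Cim w).
Definition Csub (z w : Cpx) : Cpx := (Cre z - Cre w, Cim z - Cim w).
Definition Cmul (z w : Cpx) : Cpx :=
  (Cre z * Cre w - Cim z * Cim w, Cre z * Cim w + Cim z * Cre w).
Definition Cscal (r : R) (z : Cpx) : Cpx := (r * Cre z, r * Cim z).
Fixpoint Cpow (z : Cpx) (n : nat) : Cpx :=
  match n with O => C1 | S m => Cmul z (Cpow z m) end.
Definition Cnorm2 (z : Cpx) : R := Cre z * Cre z + Cim z * Cim z.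
Definition Cabs (z : Cpx) : R := sqrt (Cnorm2 z).

Fixpoint Csum (f : nat -> Cpx) (n : nat) : Cpx :=
  match n with O => C0 | S m => Cadd (Csum f m) (f m) end.
Fixpoint Rsum (f : nat -> R) (n : nat) : R :=
  match n with O => 0 | S m => Rsum f m + f m end.

(** A degree-N polynomial P = sum_{i=0}^N a_i z^i is given by its degree N and
    coefficient function a (values a i for i > N are irrelevant). *)
Definition peval (N : nat) (a : nat -> Cpx) (z : Cpx) : Cpx :=
  Csum (fun i => Cmul (a i) (Cpow z i)) (S N).

Definition pderiv_eval (N : nat) (a : nat -> Cpx) (z : Cpx) : Cpx :=
  Csum (fun i => Cscal (INR (S i)) (Cmul (a (S i)) (Cpow z i))) N.

Definition monic_deg (N : nat) (a : nat -> Cpx) : Prop := a N = C1.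

Definition BW_norm (N : nat) (a : nat -> Cpx) : R :=
  sqrt (Rsum (fun i => Cnorm2 (a i) / Binomial.C N i) (S N)).

Definition mu_norm_at (N : nat) (a : nat -> Cpx) (z : Cpx) : R :=
  sqrt (INR N) * BW_norm N a * Rpower (1 + Cnorm2 z) (INR N / 2 - 1)
  / Cabs (pderiv_eval N a z).

(** mu_norm(P) <= b, with the convention mu_norm(P,z) = +infinity at multiple
    roots: every root is simple and mu_norm(P,z) <= b there. *)
Definition mu_norm_le (N : nat) (a : nat -> Cpx) (b : R) : Prop :=
  forall z : Cpx, peval N a z = C0 ->
    pderiv_eval N a z <> C0 /\ mu_norm_at N a z <= b.

(** zs is the list of roots of P (with multiplicity): P(z) = prod (z - zs_i). *)
Definition Cprod_lin (zs : list Cpx) (z : Cpx) : Cpx :=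
  fold_right (fun r acc => Cmul (Csub z r) acc) C1 zs.
Definition roots_of (N : nat) (a : nat -> Cpx) (zs : list Cpx) : Prop :=
  length zs = N /\ forall z : Cpx, peval N a z = Cprod_lin zs z.

Definition R3 : Type := (R * R * R)%type.
Definition on_sphere (x : R3) : Prop :=
  let '(a, b, c) := x in a * a + b * b + c * c = 1.
Definition dist3 (x y : R3) : R :=
  let '(a, b, c) := x in let '(a', b', c') := y in
  sqrt ((a - a') * (a - a') + (b - b') * (b - b') + (c - c') * (c - c')).

(** Stereographic projection from the North pole (defined for c <> 1). *)
Definition stereo (x : R3) : Cpx :=
  let '(a, b, c) := x in (a / (1 - c), b / (1 - c)).
Definition not_north (x : R3) : Prop := let '(_, _, c) := x in c <> 1.

Definition stereo_preimage (zs : list Cpx) (xs : list R3) : Prop :=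
  length xs = length zs /\
  forall i : nat, (i < length zs)%nat ->
    on_sphere (nth i xs (0,0,0)) /\ not_north (nth i xs (0,0,0)) /\
    stereo (nth i xs (0,0,0)) = nth i zs C0.

Definition E_log (xs : list R3) : R :=
  - Rsum (fun i => Rsum (fun j =>
        if Nat.eq_dec i j then 0
        else ln (dist3 (nth i xs (0,0,0)) (nth j xs (0,0,0)))) (length xs))
      (length xs).

(** kappa = 1/2 - log 2 (value of the continuous log-energy of sigma on S^2). *)
Definition kappa : R := / 2 - ln 2.

(* Main.v *)
Require Import Defs.
From Stdlib Require Import Reals Lra Lia Psatz Factorial List.
From Coquelicot Require Import Coquelicot.
Import Defs.
Open Scope R_scope.

Fixpoint Rprod (f : nat -> R) (n : nat) : R :=
  match n with O => 1 | S m => Rprod f m * f m end.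

Lemma is_RInt_val (f : R -> R) a b l l' : is_RInt f a b l -> l = l' -> is_RInt f a b l'.
Proof. intros H ->; exact H. Qed.

Lemma cont_poly j k x : continuous (fun t => t ^ j * (1 - t) ^ k) x.
Proof. apply (ex_derive_continuous (V:=R_CompleteNormedModule)). auto_derive. auto. Qed.

Lemma beta_int k : forall j,
  is_RInt (fun t => t ^ j * (1 - t) ^ k) 0 1
    (INR (fact j) * INR (fact k) / INR (fact (j + k + 1))).
Proof.
induction k as [|k IH]; intros j.
- assert (H := is_RInt_derive (fun t => t ^ (S j) / INR (S j))
     (fun t => t ^ j * (1 - t) ^ 0) 0 1).
  eapply is_RInt_val. apply H.
  + intros x _. auto_derive. auto.
    change (match j with 0%nat => 1 | S _ => INR j + 1 end) with (INR (S j)). simpl. field.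
    change (match j with 0%nat => 1 | S _ => INR j + 1 end) with (INR (S j)).
    pose proof (pos_INR j); rewrite S_INR; lra.
  + intros x _; apply cont_poly.
  + rewrite Nat.add_0_r. replace (j+1)%nat with (S j) by lia.
    rewrite fact_simpl, mult_INR, pow1, pow_i by lia.
    rewrite S_INR; unfold minus, plus, opp; simpl. field.
    split; [pose proof (INR_fact_lt_0 j); lra| pose proof (pos_INR j); lra].
- assert (H := is_RInt_derive (fun t => t ^ (S j) * (1 - t) ^ (S k))
     (fun t => INR (S j) * (t ^ j * (1 - t) ^ (S k)) - INR (S k) * (t ^ (S j) * (1 - t) ^ k)) 0 1).
  assert (H0 : is_RInt (fun t => INR (S j) * (t ^ j * (1 - t) ^ (S k)) - INR (S k) * (t ^ (S j) * (1 - t) ^ k)) 0 1 0).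
  { eapply is_RInt_val. apply H.
    + intros x _. auto_derive. auto.
      change (match j with 0%nat => 1 | S _ => INR j + 1 end) with (INR (S j)).
      change (match k with 0%nat => 1 | S _ => INR k + 1 end) with (INR (S k)). rewrite !S_INR. simpl. unfold Rminus. ring.
    + intros x _. apply (ex_derive_continuous (V:=R_CompleteNormedModule)). auto_derive. auto.
    + unfold minus, plus, opp; simpl. ring. }
  assert (H1 := is_RInt_scal _ _ _ (INR (S k)) _ (IH (S j))).
  assert (H2 := is_RInt_plus _ _ _ _ _ _ H0 H1).
  assert (H3 := is_RInt_scal _ _ _ (/ INR (S j)) _ H2).
  eapply is_RInt_ext; [|eapply is_RInt_val; [exact H3|]].
  + intros x _. unfold scal, plus; simpl; unfold mult; simpl. field.
    change (match j with 0%nat => 1 | S _ => INR j + 1 end) with (INR (S j)).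
    pose proof (pos_INR j); rewrite S_INR; lra.
  + replace (S j + k + 1)%nat with (S (j + k + 1)) by lia.
    replace (j + S k + 1)%nat with (S (j + k + 1)) by lia.
    rewrite !fact_simpl, !mult_INR.
    assert (Hm : 0 < INR (S j)) by (rewrite S_INR; pose proof (pos_INR j); lra).
    assert (Hp : 0 < INR (S (j+k+1))) by (rewrite S_INR; pose proof (pos_INR (j+k+1)); lra).
    assert (Hc : 0 < INR (fact (j+k+1))) by apply INR_fact_lt_0.
    set (a := INR (fact j)). set (b := INR (fact k)). set (c := INR (fact (j+k+1))).
    set (m := INR (S j)). set (n := INR (S k)). set (p := INR (S (j+k+1))).
    unfold scal, plus; simpl; unfold mult; simpl. field. repeat split; apply Rgt_not_eq; assumption.
Qed.

Lemma ln_le_sub1 x : 0 < x -> ln x <= x - 1.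
Proof. intros Hx. pose proof (exp_ineq1_le (ln x)). rewrite exp_ln in H by lra. lra. Qed.

Lemma int_lnmax (s d : R) : 0 <= s -> 0 < d <= / 2 ->
  exists V, is_RInt (fun t => ln (Rmax t (s * (1 - t)))) d 1 V /\
            ln (1 + s) - 1 - d * (s + 2) <= V.
Proof.
intros Hs Hd.
set (u := s / (1 + s)).
assert (Hu0 : 0 <= u) by (unfold u; apply Rdiv_le_0_compat; lra).
assert (Hu1 : u < 1) by (unfold u; apply Rmult_lt_reg_r with (1+s); [lra|];
   unfold Rdiv; rewrite Rmult_assoc, Rinv_l by lra; lra).
assert (Hsu : s * (1 - u) = u) by (unfold u; field; lra).
assert (HI2 : forall a, 0 < a <= 1 -> is_RInt ln a 1 ((1 * ln 1 - 1) - (a * ln a - a))).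
{ intros a Ha.
  eapply is_RInt_val. apply (is_RInt_derive (fun t => t * ln t - t)).
  + intros x Hx. rewrite Rmin_left, Rmax_right in Hx by lra.
    auto_derive. lra. field. lra.
  + intros x Hx. rewrite Rmin_left, Rmax_right in Hx by lra.
    apply continuity_pt_filterlim. apply derivable_continuous_pt.
    exists (/ x). apply derivable_pt_lim_ln. lra.
  + unfold minus, plus, opp; simpl. ring. }
destruct (Rle_lt_dec d u) as [Hdu|Hud].
- assert (Hspos : 0 < s).
  { destruct Hs as [Hs|Hs]; auto. subst s. unfold u in Hdu. unfold Rdiv in Hdu. lra. }
  assert (HI1 : is_RInt (fun t => ln (s * (1 - t))) d u
     ((- (1 - u) * ln (s * (1 - u)) - u) - (- (1 - d) * ln (s * (1 - d)) - d))).
  { eapply is_RInt_val. apply (is_RInt_derive (fun t => - (1 - t) * ln (s * (1 - t)) - t)).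
    + intros x Hx. rewrite Rmin_left, Rmax_right in Hx by lra.
      assert (0 < s * (1 - x)) by (apply Rmult_lt_0_compat; lra).
      auto_derive. lra. unfold Rminus. field. unfold Rminus in H. lra.
    + intros x Hx. rewrite Rmin_left, Rmax_right in Hx by lra.
      assert (0 < s * (1 - x)) by (apply Rmult_lt_0_compat; lra).
      apply (ex_derive_continuous (V:=R_CompleteNormedModule)). auto_derive. lra.
    + unfold minus, plus, opp; simpl. ring. }
  assert (HI2' := HI2 u ltac:(lra)).
  exists ((- (1 - u) * ln (s * (1 - u)) - u) - (- (1 - d) * ln (s * (1 - d)) - d) +
          ((1 * ln 1 - 1) - (u * ln u - u))).
  split.
  + assert (HA : is_RInt (fun t => ln (Rmax t (s * (1 - t)))) d u
       ((- (1 - u) * ln (s * (1 - u)) - u) - (- (1 - d) * ln (s * (1 - d)) - d))).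
    { eapply is_RInt_ext; [|exact HI1]. intros x Hx.
      rewrite Rmin_left, Rmax_right in Hx by lra. cbv beta. apply f_equal. symmetry. apply Rmax_right.
      unfold u in Hx. destruct Hx as [_ Hx].
      apply Rmult_lt_compat_r with (r := 1 + s) in Hx; [|lra].
      unfold Rdiv in Hx; rewrite Rmult_assoc, Rinv_l in Hx by lra. nra. }
    assert (HB : is_RInt (fun t => ln (Rmax t (s * (1 - t)))) u 1
       ((1 * ln 1 - 1) - (u * ln u - u))).
    { eapply is_RInt_ext; [|exact HI2']. intros x Hx.
      rewrite Rmin_left, Rmax_right in Hx by lra. cbv beta. apply f_equal. symmetry. apply Rmax_left.
      unfold u in Hx. destruct Hx as [Hx _].
      apply Rmult_lt_compat_r with (r := 1 + s) in Hx; [|lra].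
      unfold Rdiv in Hx; rewrite Rmult_assoc, Rinv_l in Hx by lra. nra. }
    eapply is_RInt_val; [exact (is_RInt_Chasles _ _ _ _ _ _ HA HB)| reflexivity].
  + rewrite Hsu, ln_1.
    assert (Hlnu : ln u = ln s - ln (1 + s)).
    { unfold u, Rdiv. rewrite ln_mult, ln_Rinv by (try apply Rinv_0_lt_compat; lra). ring. }
    assert (Hlnsd : ln (s * (1 - d)) = ln s + ln (1 - d)) by (apply ln_mult; lra).
    rewrite Hlnu, Hlnsd.
    assert (H1 := ln_le_sub1 s Hspos).
    assert (H2 := ln_le_sub1 (/ (1 - d)) ltac:(apply Rinv_0_lt_compat; lra)).
    rewrite ln_Rinv in H2 by lra.
    assert (H3 : (1 - d) * ln (1 - d) >= - d).
    { assert (/ (1 - d) - 1 = d / (1 - d)) by (field; lra).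
      rewrite H in H2.
      apply Rmult_le_compat_l with (r := 1 - d) in H2; [|lra].
      unfold Rdiv in H2. replace ((1 - d) * (d * / (1 - d))) with d in H2 by (field; lra).
      lra. }
    nra.
- exists ((1 * ln 1 - 1) - (d * ln d - d)). split.
  + eapply is_RInt_ext; [|exact (HI2 d ltac:(lra))]. intros x Hx.
    rewrite Rmin_left, Rmax_right in Hx by lra. cbv beta. apply f_equal. symmetry. apply Rmax_left.
    assert (x > u) by lra.
    unfold u in H. apply Rmult_lt_compat_r with (r := 1 + s) in H; [|lra].
    unfold Rdiv in H; rewrite Rmult_assoc, Rinv_l in H by lra. nra.
  + rewrite ln_1.
    assert (H1 := ln_le_sub1 d ltac:(lra)).
    assert (H2 := ln_le_sub1 (1 + s) ltac:(lra)).
    assert (Hs2 : s * (1 - d) < d).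
    { unfold u in Hud. apply Rmult_lt_compat_r with (r := 1 + s) in Hud; [|lra].
      unfold Rdiv in Hud; rewrite Rmult_assoc, Rinv_l in Hud by lra. nra. }
    nra.
Qed.

Lemma is_RInt_Rsum (f : nat -> R -> R) (I : nat -> R) a b n :
  (forall j, (j < n)%nat -> is_RInt (f j) a b (I j)) ->
  is_RInt (fun t => Rsum (fun j => f j t) n) a b (Rsum I n).
Proof.
induction n as [|n IH]; intros H; simpl.
- eapply is_RInt_val. apply is_RInt_const. unfold scal; simpl; unfold mult; simpl. ring.
- apply (is_RInt_plus (fun t => Rsum (fun j => f j t) n) (f n)).
  + apply IH; intros; apply H; lia.
  + apply H; lia.
Qed.

Lemma ex_derive_Rsum (f : nat -> R -> R) n x :
  (forall j, ex_derive (f j) x) -> ex_derive (fun t => Rsum (fun j => f j t) n) x.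
Proof.
intros H. induction n as [|n IH]; simpl.
- apply ex_derive_const.
- apply (ex_derive_plus (fun t => Rsum (fun j => f j t) n) (f n)); auto.
Qed.

Lemma ln_Rprod (g : nat -> R) n : (forall i, (i < n)%nat -> 0 < g i) ->
  ln (Rprod g n) = Rsum (fun i => ln (g i)) n /\ 0 < Rprod g n.
Proof.
induction n as [|n IH]; intros H; simpl.
- split; [apply ln_1|lra].
- destruct IH as [IH1 IH2]. intros; apply H; lia.
  assert (0 < g n) by (apply H; lia).
  split. rewrite ln_mult by lra. rewrite IH1; ring.
  apply Rmult_lt_0_compat; lra.
Qed.

Lemma Rsum_ext (f g : nat -> R) n : (forall i, (i < n)%nat -> f i = g i) -> Rsum f n = Rsum g n.
Proof. induction n; intros H; simpl; auto. rewrite IHn. rewrite H. reflexivity. lia. intros; apply H; lia. Qed.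

Lemma Rsum_nonneg (f : nat -> R) n : (forall i, (i < n)%nat -> 0 <= f i) -> 0 <= Rsum f n.
Proof. induction n; intros H; simpl. lra. assert (0 <= f n) by (apply H; lia).
  assert (0 <= Rsum f n) by (apply IHn; intros; apply H; lia). lra. Qed.

Lemma key_integral (N : nat) (s w : nat -> R) :
  (forall i, (i < N)%nat -> 0 <= s i) ->
  (forall j, 0 <= w j) ->
  (forall t, 0 < t < 1 -> Rprod (fun i => Rmax t (s i * (1 - t))) N <=
      Rsum (fun j => w j * (t ^ j * (1 - t) ^ (N - j))) (S N)) ->
  0 < Rsum (fun j => w j * (INR (fact j) * INR (fact (N - j)) / INR (fact (j + (N - j) + 1)))) (S N) ->
  Rsum (fun i => ln (1 + s i) - 1) N <=
  ln (Rsum (fun j => w j * (INR (fact j) * INR (fact (N - j)) / INR (fact (j + (N - j) + 1)))) (S N)).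
Proof.
intros Hs Hw Hgh.
set (c := Rsum _ (S N)). intros Hc.
set (h := fun t => Rsum (fun j => w j * (t ^ j * (1 - t) ^ (N - j))) (S N)).
assert (Hh01 : is_RInt h 0 1 c).
{ unfold h, c. apply (is_RInt_Rsum (fun j t => w j * (t ^ j * (1 - t) ^ (N - j)))).
  intros j _. apply (is_RInt_scal (fun t => t ^ j * (1 - t) ^ (N - j))). apply beta_int. }
assert (Hexh : forall a b, ex_RInt h a b).
{ intros a b. apply (ex_RInt_continuous (V:=R_CompleteNormedModule)). intros z _.
  apply (ex_derive_continuous (V:=R_CompleteNormedModule)).
  unfold h. apply (ex_derive_Rsum (fun j t => w j * (t ^ j * (1 - t) ^ (N - j)))).
  intros j. auto_derive. auto. }
assert (Hhpos : forall t, 0 <= t <= 1 -> 0 <= h t).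
{ intros t Ht. unfold h. apply Rsum_nonneg. intros i _.
  apply Rmult_le_pos; auto. apply Rmult_le_pos; apply pow_le; lra. }
set (A := Rsum (fun i => ln (1 + s i) - 1) N).
set (Bs := Rsum (fun i => s i + 2) N).
assert (Hmain : forall d, 0 < d <= / 2 -> A - d * Bs <= (1 - d) * (ln c - 1) + 1).
{ intros d Hd.
  assert (Hsum : forall n, (n <= N)%nat -> exists V,
    is_RInt (fun t => Rsum (fun i => ln (Rmax t (s i * (1 - t)))) n) d 1 V /\
    Rsum (fun i => ln (1 + s i) - 1) n - d * Rsum (fun i => s i + 2) n <= V).
  { induction n as [|n IH]; intros Hn.
    - exists 0. simpl. split. eapply is_RInt_val. apply is_RInt_const.
      unfold scal; simpl; unfold mult; simpl. ring. simpl; lra.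
    - destruct IH as [V1 [H1 H2]]. lia.
      destruct (int_lnmax (s n) d (Hs n ltac:(lia)) Hd) as [V2 [H3 H4]].
      exists (V1 + V2). split.
      + simpl. apply (is_RInt_plus (fun t => Rsum (fun i => ln (Rmax t (s i * (1 - t)))) n)
                  (fun t => ln (Rmax t (s n * (1 - t))))); assumption.
      + simpl. nra. }
  destruct (Hsum N (le_n N)) as [V [HV1 HV2]].
  assert (Hup : is_RInt (fun t => (ln c - 1) + / c * h t) d 1
                  ((1 - d) * (ln c - 1) + / c * RInt h d 1)).
  { eapply is_RInt_val.
    apply (is_RInt_plus (fun _ => ln c - 1) (fun t => / c * h t)).
    apply is_RInt_const. apply (is_RInt_scal h). apply (RInt_correct (V:=R_CompleteNormedModule)). apply Hexh.
    unfold scal, plus; simpl; unfold mult; simpl. ring. }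
  assert (Hle : V <= (1 - d) * (ln c - 1) + / c * RInt h d 1).
  { apply (is_RInt_le _ _ d 1 _ _ ltac:(lra) HV1 Hup).
    intros t Ht.
    assert (Hg : forall i, (i < N)%nat -> 0 < Rmax t (s i * (1 - t))).
    { intros i Hi. apply Rlt_le_trans with t. lra. apply Rmax_l. }
    destruct (ln_Rprod _ N Hg) as [E1 E2]. rewrite <- E1.
    assert (Hgh' := Hgh t ltac:(lra)). fold (h t) in Hgh'.
    assert (ln (Rprod (fun i => Rmax t (s i * (1 - t))) N) <= ln (h t)).
    { destruct Hgh' as [Hlt|Heq]. left; apply ln_increasing; auto. rewrite Heq; lra. }
    assert (0 < h t) by lra.
    assert (Hl := ln_le_sub1 (h t / c) ltac:(apply Rdiv_lt_0_compat; lra)).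
    unfold Rdiv in Hl. rewrite ln_mult, ln_Rinv in Hl by (try apply Rinv_0_lt_compat; lra).
    lra. }
  assert (HR : RInt h d 1 <= c).
  { rewrite <- (is_RInt_unique _ _ _ _ Hh01).
    rewrite <- (RInt_Chasles h 0 d 1) by apply Hexh.
    assert (0 <= RInt h 0 d).
    { apply RInt_ge_0. lra. apply Hexh. intros x Hx. apply Hhpos; lra. }
    unfold plus; simpl. lra. }
  assert (/ c * RInt h d 1 <= 1).
  { apply Rmult_le_reg_l with c. lra. rewrite <- Rmult_assoc, Rinv_r by lra. lra. }
  unfold A, Bs. lra. }
set (K := Bs + Rabs (ln c - 1)).
destruct (Rle_lt_dec A (ln c)) as [Hok|Hbad]; [exact Hok|].
exfalso.
assert (HK : 0 < K).
{ unfold K, Bs. assert (0 <= Rsum (fun i => s i + 2) N).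
  { apply Rsum_nonneg. intros i Hi. pose proof (Hs i Hi). lra. }
  destruct N.
  - simpl in Hbad. unfold A in Hbad. simpl in Hbad.
    assert (Hc1 : c = w 0%nat) by (unfold c; simpl; field).
    pose proof (Rabs_pos (ln c - 1)).
    destruct (Req_dec (ln c - 1) 0) as [E|E].
    + assert (ln c = 1) by lra. lra.
    + pose proof (Rabs_pos_lt _ E). lra.
  - pose proof (Rabs_pos (ln c - 1)).
    assert (2 <= Rsum (fun i => s i + 2) (S N)).
    { simpl. assert (0 <= Rsum (fun i => s i + 2) N).
      { apply Rsum_nonneg. intros i Hi. pose proof (Hs i ltac:(lia)). lra. }
      pose proof (Hs N ltac:(lia)). lra. }
    lra. }
set (d := Rmin (/ 2) ((A - ln c) / (2 * K))).
assert (Hd0 : 0 < d).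
{ unfold d. apply Rmin_glb_lt. lra. apply Rdiv_lt_0_compat; lra. }
assert (Hd1 : d <= / 2) by apply Rmin_l.
assert (Hd2 : d * K <= (A - ln c) / 2).
{ assert (d <= (A - ln c) / (2 * K)) by apply Rmin_r.
  apply Rmult_le_compat_r with (r := K) in H; [|lra].
  replace ((A - ln c) / (2 * K) * K) with ((A - ln c) / 2) in H by (field; lra). lra. }
assert (H := Hmain d (conj Hd0 Hd1)).
assert (Rabs (ln c - 1) >= - (ln c - 1)) by (pose proof (Rabs_maj2 (ln c - 1)); lra).
unfold K in Hd2.
nra.
Qed.

Lemma ln_sqrt x : 0 < x -> ln (sqrt x) = ln x / 2.
Proof. intros Hx. assert (0 < sqrt x) by (apply sqrt_lt_R0; lra).
  rewrite <- (sqrt_sqrt x) at 2 by lra. rewrite ln_mult by lra. field. Qed.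

Lemma Cnorm2_nonneg z : 0 <= Cnorm2 z.
Proof. unfold Cnorm2. nra. Qed.

Lemma Cnorm2_pos z : z <> C0 -> 0 < Cnorm2 z.
Proof. intros H. destruct z as [x y]. unfold Cnorm2, Cre, Cim; simpl.
  destruct (Req_dec x 0); destruct (Req_dec y 0); subst; try nra.
  exfalso; apply H; reflexivity. Qed.

Lemma Csub_neq z w : z <> w -> Csub z w <> C0.
Proof. intros H E. apply H. destruct z as [x y], w as [x' y']. unfold Csub, C0, Cre, Cim in E; simpl in E.
  injection E; intros. f_equal; lra. Qed.

Lemma Cabs_pos z : z <> C0 -> 0 < Cabs z.
Proof. intros H. unfold Cabs. apply sqrt_lt_R0. now apply Cnorm2_pos. Qed.

Lemma ln_Cabs z : z <> C0 -> ln (Cabs z) = ln (Cnorm2 z) / 2.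
Proof. intros H. unfold Cabs. apply ln_sqrt. now apply Cnorm2_pos. Qed.

Lemma stereo_ln_dist x y z w :
  on_sphere x -> not_north x -> stereo x = z ->
  on_sphere y -> not_north y -> stereo y = w -> z <> w ->
  ln (dist3 x y) = ln 2 + ln (Cabs (Csub z w)) - / 2 * ln (1 + Cnorm2 z) - / 2 * ln (1 + Cnorm2 w).
Proof.
destruct x as [[a b] c], y as [[a' b'] c']. unfold on_sphere, not_north, stereo, dist3.
intros Hx Nx Ez Hy Ny Ew Hzw.
assert (Hzw' := Cnorm2_pos _ (Csub_neq _ _ Hzw)).
rewrite (ln_Cabs _ (Csub_neq _ _ Hzw)).
subst z w.
assert (Hc : c < 1) by (destruct (Rle_lt_dec 1 c); [exfalso; apply Nx; nra| lra]).
assert (Hc' : c' < 1) by (destruct (Rle_lt_dec 1 c'); [exfalso; apply Ny; nra| lra]).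
set (u := 1 - c) in *. set (v := 1 - c') in *.
assert (Hu : 0 < u) by (unfold u; lra). assert (Hv : 0 < v) by (unfold v; lra).
assert (N1 : 1 + Cnorm2 (a / u, b / u) = 2 / u).
{ unfold Cnorm2, Cre, Cim; simpl.
  replace (a / u * (a / u) + b / u * (b / u)) with ((a * a + b * b) / (u * u)) by (field; lra).
  replace (a * a + b * b) with (u * (2 - u)) by (unfold u; lra). field; lra. }
assert (N2 : 1 + Cnorm2 (a' / v, b' / v) = 2 / v).
{ unfold Cnorm2, Cre, Cim; simpl.
  replace (a' / v * (a' / v) + b' / v * (b' / v)) with ((a' * a' + b' * b') / (v * v)) by (field; lra).
  replace (a' * a' + b' * b') with (v * (2 - v)) by (unfold v; lra). field; lra. }
rewrite N1, N2.
set (K := Cnorm2 (Csub (a / u, b / u) (a' / v, b' / v))) in *.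
assert (HD : (a - a') * (a - a') + (b - b') * (b - b') + (c - c') * (c - c') = u * v * K).
{ unfold K, Cnorm2, Csub, Cre, Cim; simpl.
  replace (u * v * ((a / u - a' / v) * (a / u - a' / v) + (b / u - b' / v) * (b / u - b' / v)))
    with ((v / u) * (a * a + b * b) + (u / v) * (a' * a' + b' * b') - 2 * (a * a' + b * b'))
    by (field; split; lra).
  replace (a * a + b * b) with (u * (2 - u)) by (unfold u; lra).
  replace (a' * a' + b' * b') with (v * (2 - v)) by (unfold v; lra).
  replace (v / u * (u * (2 - u))) with (v * (2 - u)) by (field; lra).
  replace (u / v * (v * (2 - v))) with (u * (2 - v)) by (field; lra).
  unfold u, v. nra. }
rewrite HD.
assert (0 < u * v * K) by (apply Rmult_lt_0_compat; [apply Rmult_lt_0_compat|]; lra).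
rewrite ln_sqrt by lra.
rewrite !ln_mult by (try apply Rmult_lt_0_compat; lra).
unfold Rdiv. rewrite !ln_mult by (try apply Rinv_0_lt_compat; lra).
rewrite !ln_Rinv by lra. field.
Qed.

Lemma Rsum_plus f g n : Rsum (fun i => f i + g i) n = Rsum f n + Rsum g n.
Proof. induction n; simpl; [ring| rewrite IHn; ring]. Qed.
Lemma Rsum_scal k f n : Rsum (fun i => k * f i) n = k * Rsum f n.
Proof. induction n; simpl; [ring| rewrite IHn; ring]. Qed.
Lemma Rsum_const k n : Rsum (fun _ => k) n = INR n * k.
Proof. induction n; [simpl; ring|]. change (Rsum (fun _ => k) (S n)) with (Rsum (fun _ => k) n + k). rewrite IHn, S_INR; ring. Qed.
Lemma Rsum_le f g n : (forall i, (i < n)%nat -> f i <= g i) -> Rsum f n <= Rsum g n.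
Proof. induction n; intros H; simpl. lra. assert (f n <= g n) by (apply H; lia).
  assert (Rsum f n <= Rsum g n) by (apply IHn; intros; apply H; lia). lra. Qed.
Lemma Rsum_excl i n f : (i < n)%nat ->
  Rsum (fun j => if Nat.eq_dec i j then 0 else f j) n = Rsum f n - f i.
Proof.
induction n; intros H; [lia|]. simpl.
destruct (Nat.eq_dec i n) as [E|E].
- subst. rewrite (Rsum_ext _ f). ring. intros j Hj. destruct (Nat.eq_dec n j); [lia|auto].
- rewrite IHn by lia. ring.
Qed.
Lemma Rprod_nonzero f n : Rprod f n <> 0 -> forall j, (j < n)%nat -> f j <> 0.
Proof. induction n; intros H j Hj; [lia|]. simpl in H.
  destruct (Nat.eq_dec j n). subst. intros E; apply H; rewrite E; ring.
  apply IHn; [intros E; apply H; rewrite E; ring| lia]. Qed.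
Lemma Rprod_scal f k n : Rprod f n * k ^ n = Rprod (fun i => f i * k) n.
Proof. induction n; simpl; [ring| rewrite <- IHn; ring]. Qed.
Lemma Rsum_mult_r f k n : Rsum f n * k = Rsum (fun i => f i * k) n.
Proof. induction n; simpl; [ring| rewrite <- IHn; ring]. Qed.
Lemma Rprod_ext (f g : nat -> R) n : (forall i, (i < n)%nat -> f i = g i) -> Rprod f n = Rprod g n.
Proof. induction n; intros H; simpl; auto. rewrite IHn. rewrite H. reflexivity. lia. intros; apply H; lia. Qed.

Lemma Cprod_lin_root zs z : In z zs -> Cprod_lin zs z = C0.
Proof.
induction zs as [|r zs IH]; simpl; [tauto|]. intros [E|H].
- subst. unfold Cmul, Csub, C0, Cre, Cim; simpl. f_equal; ring.
- rewrite IH by auto. unfold Cmul, C0, Cre, Cim; simpl. f_equal; ring.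
Qed.

Lemma Binom_pos n j : 0 < Binomial.C n j.
Proof. unfold Binomial.C. apply Rdiv_lt_0_compat. apply INR_fact_lt_0.
  apply Rmult_lt_0_compat; apply INR_fact_lt_0. Qed.

Lemma c_eq N (a : nat -> Cpx) :
  Rsum (fun j => Cnorm2 (a j) * (INR (fact j) * INR (fact (N - j)) / INR (fact (j + (N - j) + 1)))) (S N)
  = Rsum (fun i => Cnorm2 (a i) / Binomial.C N i) (S N) / (INR N + 1).
Proof.
unfold Rdiv at 2. rewrite Rsum_mult_r. apply Rsum_ext. intros j Hj.
replace (j + (N - j) + 1)%nat with (S N) by lia.
rewrite fact_simpl, mult_INR, S_INR. unfold Binomial.C.
pose proof (INR_fact_lt_0 N). pose proof (INR_fact_lt_0 j). pose proof (INR_fact_lt_0 (N - j)).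
pose proof (pos_INR N).
field. repeat split; apply Rgt_not_eq; lra.
Qed.

Lemma assembly N a b zs xs :
  0 < b -> a N = C1 -> length zs = N -> stereo_preimage zs xs -> mu_norm_le N a b ->
  (forall z, peval N a z = Cprod_lin zs z) ->
  (forall i, (i < N)%nat -> Cabs (pderiv_eval N a (nth i zs C0)) =
      Rprod (fun j => if Nat.eq_dec i j then 1 else Cabs (Csub (nth i zs C0) (nth j zs C0))) N) ->
  (forall rho, 0 < rho -> Rprod (fun i => Rmax rho (Cnorm2 (nth i zs C0))) N <=
      Rsum (fun j => Cnorm2 (a j) * rho ^ j) (S N)) ->
  E_log xs <= kappa * INR N ^ 2 - INR N * ln (sqrt (INR N * (INR N + 1)) / 2) + INR N * ln b.
Proof.
intros Hb HaN Hlen [Hlx Hpre] Hmu Hroots HA1 HA2.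
destruct (Nat.eq_dec N 0) as [N0|NN0].
{ rewrite N0 in *. destruct xs; [|simpl in Hlx; lia]. unfold E_log; simpl. lra. }
assert (HNpos : 0 < INR N) by (apply lt_0_INR; lia).
set (z := fun i => nth i zs C0).
set (s := fun i => Cnorm2 (z i)).
set (l := fun i => ln (1 + s i)).
set (L := Rsum l N).
set (BW := BW_norm N a).
assert (Hroot : forall i, (i < N)%nat -> peval N a (z i) = C0).
{ intros i Hi. rewrite Hroots. apply Cprod_lin_root. apply nth_In. lia. }
assert (Hdpos : forall i, (i < N)%nat -> 0 < Cabs (pderiv_eval N a (z i))).
{ intros i Hi. apply Cabs_pos. apply (Hmu _ (Hroot i Hi)). }
assert (Hne : forall i j, (i < N)%nat -> (j < N)%nat -> i <> j -> z i <> z j).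
{ intros i j Hi Hj Hij E.
  assert (Hp := Hdpos i Hi). unfold z in Hp. rewrite HA1 in Hp by lia.
  assert (Hnz := Rprod_nonzero _ _ (Rgt_not_eq _ _ Hp) j Hj). simpl in Hnz.
  destruct (Nat.eq_dec i j); [contradiction|].
  apply Hnz. fold (z i) (z j). rewrite E. unfold Cabs, Cnorm2, Csub, Cre, Cim; simpl.
  replace (fst (z j) - fst (z j)) with 0 by ring. replace (snd (z j) - snd (z j)) with 0 by ring.
  replace (0 * 0 + 0 * 0) with 0 by ring. apply sqrt_0. }
assert (HlnP : forall i, (i < N)%nat -> ln (Cabs (pderiv_eval N a (z i))) =
   Rsum (fun j => if Nat.eq_dec i j then 0 else ln (Cabs (Csub (z i) (z j)))) N).
{ intros i Hi. unfold z at 1. rewrite HA1 by lia.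
  destruct (ln_Rprod (fun j => if Nat.eq_dec i j then 1 else Cabs (Csub (nth i zs C0) (nth j zs C0))) N)
    as [E1 _].
  { intros j Hj. destruct (Nat.eq_dec i j). lra. apply Cabs_pos, Csub_neq. apply Hne; auto. }
  rewrite E1. apply Rsum_ext. intros j Hj. destruct (Nat.eq_dec i j). apply ln_1. reflexivity. }
assert (HBWpos : 0 < BW).
{ unfold BW, BW_norm. apply sqrt_lt_R0. simpl.
  assert (0 <= Rsum (fun i => Cnorm2 (a i) / Binomial.C N i) N).
  { apply Rsum_nonneg. intros i _. apply Rdiv_le_0_compat. apply Cnorm2_nonneg. apply Binom_pos. }
  rewrite HaN. replace (Cnorm2 C1) with 1 by (unfold Cnorm2, C1, Cre, Cim; simpl; ring).
  assert (0 < Binomial.C N N) by apply Binom_pos.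
  assert (0 < 1 / Binomial.C N N) by (apply Rdiv_lt_0_compat; lra). lra. }
assert (Hmub : forall i, (i < N)%nat ->
   / 2 * ln (INR N) + ln BW + (INR N / 2 - 1) * l i <= ln b + ln (Cabs (pderiv_eval N a (z i)))).
{ intros i Hi. destruct (Hmu _ (Hroot i Hi)) as [_ Hle].
  unfold mu_norm_at in Hle. fold BW in Hle.
  assert (Hd := Hdpos i Hi).
  assert (H1s : 0 < 1 + Cnorm2 (z i)) by (pose proof (Cnorm2_nonneg (z i)); lra).
  assert (HRp : 0 < Rpower (1 + Cnorm2 (z i)) (INR N / 2 - 1)) by (unfold Rpower; apply exp_pos).
  assert (HsN : 0 < sqrt (INR N)) by (apply sqrt_lt_R0; lra).
  assert (HX : 0 < sqrt (INR N) * BW * Rpower (1 + Cnorm2 (z i)) (INR N / 2 - 1))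
    by (repeat apply Rmult_lt_0_compat; lra).
  assert (Hle2 : sqrt (INR N) * BW * Rpower (1 + Cnorm2 (z i)) (INR N / 2 - 1) <=
                 b * Cabs (pderiv_eval N a (z i))).
  { apply Rmult_le_reg_r with (/ Cabs (pderiv_eval N a (z i))). apply Rinv_0_lt_compat; lra.
    replace (b * Cabs (pderiv_eval N a (z i)) * / Cabs (pderiv_eval N a (z i))) with b by (field; lra).
    exact Hle. }
  assert (Hln := Rle_trans _ _ _ (Req_le _ _ eq_refl) Hle2).
  destruct Hle2 as [Hlt|Heq].
  - apply ln_increasing in Hlt; [|exact HX].
    rewrite !ln_mult, ln_Rpower, ln_sqrt in Hlt by (try apply Rmult_lt_0_compat; lra).
    unfold l, s. lra.
  - apply (f_equal ln) in Heq.
    rewrite !ln_mult, ln_Rpower, ln_sqrt in Heq by (try apply Rmult_lt_0_compat; lra).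
    unfold l, s. lra. }
assert (Hdist : forall i j, (i < N)%nat -> (j < N)%nat -> i <> j ->
   ln (dist3 (nth i xs (0,0,0)) (nth j xs (0,0,0))) =
   ln 2 + ln (Cabs (Csub (z i) (z j))) - / 2 * l i - / 2 * l j).
{ intros i j Hi Hj Hij.
  destruct (Hpre i ltac:(lia)) as [S1 [N1 E1]]. destruct (Hpre j ltac:(lia)) as [S2 [N2 E2]].
  apply stereo_ln_dist; auto. }
assert (Hinner : forall i, (i < N)%nat ->
   Rsum (fun j => if Nat.eq_dec i j then 0 else ln (dist3 (nth i xs (0,0,0)) (nth j xs (0,0,0)))) N
   = ln (Cabs (pderiv_eval N a (z i))) + ((INR N - 1) * ln 2 - (INR N / 2 - 1) * l i - / 2 * L)).
{ intros i Hi.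
  rewrite (Rsum_ext _ (fun j => (if Nat.eq_dec i j then 0 else ln (Cabs (Csub (z i) (z j)))) +
       (if Nat.eq_dec i j then 0 else ((ln 2 - / 2 * l i) + (- / 2) * l j)))).
  2:{ intros j Hj. destruct (Nat.eq_dec i j). ring. rewrite Hdist by auto. ring. }
  rewrite Rsum_plus, <- HlnP by auto. rewrite Rsum_excl by auto.
  rewrite Rsum_plus, Rsum_const, Rsum_scal. fold L. field. }
assert (HE : E_log xs <= - INR N * (/ 2 * ln (INR N) + ln BW - ln b + (INR N - 1) * ln 2 - / 2 * L)).
{ unfold E_log. rewrite Hlx, Hlen.
  assert (Rsum (fun _ => / 2 * ln (INR N) + ln BW - ln b + (INR N - 1) * ln 2 - / 2 * L) N <=
          Rsum (fun i => Rsum (fun j => if Nat.eq_dec i j then 0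
               else ln (dist3 (nth i xs (0,0,0)) (nth j xs (0,0,0)))) N) N).
  { apply Rsum_le. intros i Hi. rewrite Hinner by auto. pose proof (Hmub i Hi). lra. }
  rewrite Rsum_const in H. lra. }
assert (Hc : Rsum (fun j => Cnorm2 (a j) * (INR (fact j) * INR (fact (N - j)) / INR (fact (j + (N - j) + 1)))) (S N)
             = BW * BW / (INR N + 1)).
{ rewrite c_eq. unfold BW, BW_norm. rewrite sqrt_sqrt. reflexivity.
  apply Rsum_nonneg. intros i _. apply Rdiv_le_0_compat. apply Cnorm2_nonneg. apply Binom_pos. }
assert (HK := key_integral N s (fun j => Cnorm2 (a j))).
cbv beta in HK. rewrite Hc in HK.
assert (HK2 : Rsum (fun i => ln (1 + s i) - 1) N <= ln (BW * BW / (INR N + 1))).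
{ apply HK.
  - intros i _. apply Cnorm2_nonneg.
  - intros j. apply Cnorm2_nonneg.
  - intros t Ht. set (rho := t / (1 - t)).
    assert (Hrho : 0 < rho) by (unfold rho; apply Rdiv_lt_0_compat; lra).
    assert (H2 := HA2 rho Hrho).
    apply Rmult_le_compat_r with (r := (1 - t) ^ N) in H2; [|apply pow_le; lra].
    rewrite Rprod_scal, Rsum_mult_r in H2.
    eapply Rle_trans; [eapply Rle_trans; [|exact H2]|].
    + right. apply Rprod_ext. intros i Hi. unfold s, z.
      rewrite (Rmult_comm (Rmax _ _)), <- RmaxRmult by lra. f_equal; [unfold rho; field; lra | ring].
    + right. apply Rsum_ext. intros j Hj.
      replace N with (j + (N - j))%nat at 1 by lia. rewrite pow_add.
      replace (t ^ j) with ((rho * (1 - t)) ^ j) by (f_equal; unfold rho; field; lra).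
      rewrite Rpow_mult_distr. ring.
  - apply Rdiv_lt_0_compat; [apply Rmult_lt_0_compat|]; lra. }
rewrite (Rsum_ext _ (fun i => l i + (-1))) in HK2 by (intros; unfold l; ring).
rewrite Rsum_plus, Rsum_const in HK2. fold L in HK2.
unfold Rdiv in HK2. rewrite ln_mult, ln_mult, ln_Rinv in HK2 by (try apply Rmult_lt_0_compat; try apply Rinv_0_lt_compat; lra).
assert (HL : INR N / 2 * L <= INR N / 2 * (INR N + 2 * ln BW - ln (INR N + 1))).
{ apply Rmult_le_compat_l. lra. lra. }
assert (Hsq : ln (sqrt (INR N * (INR N + 1)) / 2) = / 2 * ln (INR N) + / 2 * ln (INR N + 1) - ln 2).
{ unfold Rdiv. rewrite ln_mult, ln_Rinv, ln_sqrt, ln_mult by (try apply sqrt_lt_R0; try apply Rmult_lt_0_compat; lra).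
  field. }
rewrite Hsq. unfold kappa.
nra.
Qed.


From mathcomp Require Import all_boot all_order all_algebra.
From mathcomp Require Import Rstruct complex ring.
Import Order.TTheory GRing.Theory Num.Theory.
Import Defs.

Set Implicit Arguments. Unset Strict Implicit. Unset Printing Implicit Defensive.

Local Open Scope ring_scope.

Notation CC := (complex Rdefinitions.R).

Definition toC (z : Cpx) : CC := Complex (fst z) (snd z).

Lemma toC_add z w : toC (Cadd z w) = toC z + toC w.
Proof. by case: z; case: w. Qed.
Lemma toC_sub z w : toC (Csub z w) = toC z - toC w.
Proof. by case: z; case: w. Qed.
Lemma toC_mul z w : toC (Cmul z w) = toC z * toC w.
Proof. by case: z; case: w. Qed.
Lemma toC_C0 : toC C0 = 0. Proof. by []. Qed.
Lemma toC_C1 : toC C1 = 1. Proof. by []. Qed.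
Lemma toC_pow z n : toC (Cpow z n) = toC z ^+ n.
Proof. elim: n => [|n IH] /=; first by []. by rewrite toC_mul IH exprS. Qed.
Lemma toC_scal r z : toC (Cscal r z) = (Complex r 0) * toC z.
Proof. case: z => x y. rewrite /toC /Cscal /= /Cre /Cim /=. apply/eqP; rewrite eq_complex /=. apply/andP; split; apply/eqP; rewrite ?RmultE; ring. Qed.
Lemma toC_Csum f n : toC (Csum f n) = \sum_(i < n) toC (f i).
Proof. elim: n => [|n IH]; first by rewrite big_ord0. by rewrite big_ord_recr /= toC_add IH. Qed.
Lemma toC_surj x : exists z, toC z = x.
Proof. case: x => a b. by exists (a, b). Qed.
Lemma normc_toC z : Normc.normc (toC z) = Cabs z.
Proof. case: z => x y. by rewrite /Cabs RsqrtE /Cnorm2 /Cre /Cim /= !expr2. Qed.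

Definition Pa N (a : nat -> Cpx) : {poly CC} := \poly_(i < N.+1) toC (a i).

Lemma peval_Pa N a z : toC (peval N a z) = (Pa N a).[toC z].
Proof.
rewrite /peval toC_Csum (horner_coef_wide _ (size_poly _ _)).
apply: eq_bigr => i _. by rewrite toC_mul toC_pow coef_poly ltn_ord.
Qed.

Lemma natC n : (n%:R : CC) = Complex (INR n) 0.
Proof. by rewrite INRE -[RHS]/(real_complex _ (n%:R)) rmorph_nat. Qed.

Lemma pderiv_Pa N a z : toC (pderiv_eval N a z) = (Pa N a)^`().[toC z].
Proof.
have Hs : (size (Pa N a)^`() <= N)%N.
{ have [->|nz] := eqVneq (Pa N a) 0; first by rewrite deriv0 size_poly0.
  have := lt_size_deriv nz. have := size_poly N.+1 (fun i => toC (a i)).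
  rewrite -/(Pa N a). move=> h1 h2. by rewrite -ltnS (leq_trans h2 h1). }
rewrite /pderiv_eval toC_Csum (horner_coef_wide _ Hs).
apply: eq_bigr => i _. rewrite toC_scal toC_mul toC_pow coef_deriv coef_poly ltnS ltn_ord.
by rewrite -mulr_natl natC mulrA.
Qed.

Lemma Cprod_toC zs z : toC (Cprod_lin zs z) =
  \prod_(j < List.length zs) (toC z - toC (List.nth j zs C0)).
Proof.
elim: zs => [|r zs IH] /=; first by rewrite big_ord0.
rewrite big_ord_recl toC_mul toC_sub IH /=. by congr (_ * _).
Qed.

Definition Qp (zs : list Cpx) : {poly CC} :=
  \prod_(j < List.length zs) ('X - (toC (List.nth j zs C0))%:P).

Lemma Qp_eval zs x : (Qp zs).[x] = \prod_(j < List.length zs) (x - toC (List.nth j zs C0)).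
Proof. rewrite /Qp horner_prod. by apply: eq_bigr => j _; rewrite hornerXsubC. Qed.

Lemma poly_ext (p q : {poly CC}) : (forall x, p.[x] = q.[x]) -> p = q.
Proof.
move=> H. apply/eqP; rewrite -subr_eq0; apply/negPn/negP => Hne.
set rs := [seq (i%:R : CC) | i <- iota 0 (size (p - q))].
have : (size rs < size (p - q)%R)%N.
{ apply: (max_poly_roots Hne).
  - apply/allP => x _. by rewrite /root hornerD hornerN H subrr.
  - rewrite map_inj_uniq ?iota_uniq // => m n /eqP. by rewrite eqr_nat => /eqP. }
by rewrite size_map size_iota ltnn.
Qed.

Lemma Pa_eq N a zs : (forall z, peval N a z = Cprod_lin zs z) -> Pa N a = Qp zs.
Proof.
move=> H. apply: poly_ext => x. have [z <-] := toC_surj x.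
by rewrite -peval_Pa H Cprod_toC Qp_eval.
Qed.

Lemma Rprod_big f n : Rprod f n = \prod_(j < n) f j.
Proof. elim: n => [|n IH] /=; first by rewrite big_ord0. by rewrite big_ord_recr /= IH. Qed.

Lemma Rsum_big f n : Rsum f n = \sum_(j < n) f j.
Proof. elim: n => [|n IH] /=; first by rewrite big_ord0. by rewrite big_ord_recr /= IH. Qed.

Lemma A1 N a zs : List.length zs = N -> (forall z, peval N a z = Cprod_lin zs z) ->
  forall i, Peano.lt i N -> Cabs (pderiv_eval N a (List.nth i zs C0)) =
  Rprod (fun j => match Nat.eq_dec i j with left _ => 1%R | right _ => Cabs (Csub (List.nth i zs C0) (List.nth j zs C0)) end) N.
Proof.
move=> Hlen H i Hi. subst N.
rewrite -normc_toC pderiv_Pa (Pa_eq H) /Qp.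
have Hi' : (i < List.length zs)%N by apply/ssrnat.ltP.
pose i' := Ordinal Hi'.
rewrite (bigD1 i') //= derivM derivXsubC mul1r hornerD hornerM hornerXsubC subrr mul0r addr0 horner_prod.
rewrite (big_morph _ (@Normc.normcM _) (@Normc.normc1 _)).
rewrite Rprod_big big_mkcond /=. apply: eq_bigr => j _.
rewrite hornerXsubC -toC_sub normc_toC.
case: Nat.eq_dec => [E|E]; case: ifP => //= Hj.
- exfalso. move/eqP: Hj; apply; apply/val_inj; by rewrite /= E.
- exfalso. move/negbFE/eqP: Hj => Hj. apply: E. by rewrite Hj.
Qed.

Definition n2 (x : CC) : Rdefinitions.R := let: Complex u v := x in GRing.add (GRing.mul u u) (GRing.mul v v).

Lemma n2C x : real_complex _ (n2 x) = x * conjc x.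
Proof. case: x => u v. apply/eqP; rewrite eq_complex /=. apply/andP; split; apply/eqP; ring. Qed.

Lemma n2_ge0 x : 0 <= n2 x.
Proof. case: x => u v /=. by rewrite addr_ge0 // -expr2 sqr_ge0. Qed.

Lemma n2_toC z : n2 (toC z) = Cnorm2 z.
Proof. by case: z. Qed.

Lemma n2_0 : n2 0 = 0.
Proof. by rewrite /= mulr0 addr0. Qed.

Lemma n2_1 : n2 1 = 1.
Proof. by rewrite /= mulr0 addr0 mulr1. Qed.

Definition Wn (q : Rdefinitions.R) n (P : {poly CC}) : Rdefinitions.R :=
  \sum_(j < n) GRing.mul (n2 (P`_j)) (q ^+ j).
Definition WnC (q : Rdefinitions.R) n (P : {poly CC}) : CC :=
  \sum_(j < n) P`_j * conjc (P`_j) * (real_complex _ q) ^+ j.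

Lemma rcM (x y : Rdefinitions.R) : real_complex _ (x * y) = real_complex _ x * real_complex _ y.
Proof. exact: rmorphM. Qed.
Lemma rcX (x : Rdefinitions.R) k : real_complex _ (x ^+ k) = (real_complex _ x) ^+ k.
Proof. exact: rmorphXn. Qed.
Lemma rcD (x y : Rdefinitions.R) : real_complex _ (x + y) = real_complex _ x + real_complex _ y.
Proof. exact: rmorphD. Qed.
Lemma rc_sum n (F : 'I_n -> Rdefinitions.R) : real_complex _ (\sum_(j < n) F j) = \sum_(j < n) real_complex _ (F j).
Proof. exact: rmorph_sum. Qed.

Lemma cjB (x y : CC) : conjc (x - y) = conjc x - conjc y.
Proof. exact: rmorphB. Qed.
Lemma cjM (x y : CC) : conjc (x * y) = conjc x * conjc y.
Proof. exact: rmorphM. Qed.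
Lemma cjV (x : CC) : conjc (x^-1) = (conjc x)^-1.
Proof. exact: conjc_inv. Qed.
Lemma cjK (x : CC) : conjc (conjc x) = x.
Proof. exact: conjcK. Qed.
Lemma cjR (x : Rdefinitions.R) : conjc (real_complex _ x) = real_complex _ x.
Proof. exact: conjc_real. Qed.

Lemma WnC_Wn q n P : real_complex _ (Wn q n P) = WnC q n P.
Proof. rewrite /Wn rc_sum. apply: eq_bigr => j _. by rewrite rcM rcX n2C. Qed.

Lemma coef_XsubC_mul a (S : {poly CC}) j :
  (('X - a%:P) * S)`_j = (if j == 0 then 0 else S`_j.-1) - a * S`_j.
Proof. by rewrite mulrBl coefB coefXM coefCM. Qed.

Lemma coef_1subX_mul b (S : {poly CC}) j :
  ((1 - b%:P * 'X) * S)`_j = S`_j - b * (if j == 0 then 0 else S`_j.-1).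
Proof. by rewrite mulrBl mul1r coefB -mulrA coefCM coefXM. Qed.

Lemma WnC_big q n a S : a != 0 ->
  WnC q n (('X - a%:P) * S) = a * conjc a * WnC q n ((1 - (a^-1)%:P * 'X) * S).
Proof.
move=> a0. rewrite /WnC mulr_sumr. apply: eq_bigr => j _.
rewrite coef_XsubC_mul coef_1subX_mul.
set G := (if _ then _ else _). set F := S`_j.
rewrite !cjB !cjM cjV.
have a0' : conjc a != 0 by rewrite conjc_eq0.
field. by rewrite a0 a0'.
Qed.

Definition Gf (S : {poly CC}) (j : nat) : CC := if j == 0%N then 0 else S`_j.-1.

Lemma telescope q n (S : {poly CC}) : (size S < n)%N ->
  \sum_(j < n) ((Gf S j * conjc (Gf S j) - real_complex _ q * (S`_j * conjc (S`_j))) *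
     (real_complex _ q) ^+ j) = 0.
Proof.
case: n => [|m] // Hs.
rewrite (eq_bigr (fun j : 'I_m.+1 => Gf S j * conjc (Gf S j) * (real_complex _ q) ^+ j -
          real_complex _ q * (S`_j * conjc (S`_j)) * (real_complex _ q) ^+ j)); last first.
  by move=> j _; rewrite mulrBl.
rewrite sumrB big_ord_recl big_ord_recr.
have G0 : Gf S 0 = 0 by [].
have GS : forall i : 'I_m, Gf S (lift ord0 i) = S`_i by move=> i; rewrite /Gf lift0.
have -> : S`_m = 0 by rewrite nth_default // -ltnS.
rewrite G0 !conjc0 !mul0r !mulr0 !mul0r /= addr0 add0r.
apply/eqP; rewrite subr_eq0. apply/eqP. apply: eq_bigr => i _.
rewrite GS /bump /= add1n exprS. ring.
Qed.

Lemma WnC_small (q : Rdefinitions.R) n (a : CC) (S : {poly CC}) : 0 < q -> (size S < n)%N ->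
  WnC q n (('X - a%:P) * S) =
  real_complex _ q * WnC q n ((1 - (conjc a / real_complex _ q)%:P * 'X) * S).
Proof.
move=> q0 Hs. set Q := real_complex _ q.
have Q0 : Q != 0 by apply/eqP => -[] Hq; move: q0; rewrite Hq ltxx.
apply/eqP; rewrite -subr_eq0. rewrite /WnC mulr_sumr -sumrB.
rewrite (eq_bigr (fun j : 'I_n => (1 - a * conjc a / Q) *
   ((Gf S j * conjc (Gf S j) - Q * (S`_j * conjc (S`_j))) * Q ^+ j))).
  by rewrite -mulr_sumr telescope // mulr0.
move=> j _. rewrite coef_XsubC_mul coef_1subX_mul -/(Gf S j).
rewrite !cjB !cjM cjV /Q cjR cjK.
field. by rewrite -/Q Q0.
Qed.

Lemma Wn_big q n a S : a != 0 ->
  Wn q n (('X - a%:P) * S) = n2 a * Wn q n ((1 - (a^-1)%:P * 'X) * S).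
Proof. move=> a0; apply: complexI. by rewrite rcM !WnC_Wn n2C WnC_big. Qed.

Lemma Wn_small (q : Rdefinitions.R) n (a : CC) (S : {poly CC}) : 0 < q -> (size S < n)%N ->
  Wn q n (('X - a%:P) * S) = q * Wn q n ((1 - (conjc a / real_complex _ q)%:P * 'X) * S).
Proof. move=> q0 Hs; apply: complexI. by rewrite rcM !WnC_Wn WnC_small. Qed.

Lemma Wn_ge_coef0 (q : Rdefinitions.R) n (T : {poly CC}) : 0 <= q -> (0 < n)%N -> n2 (T`_0) <= Wn q n T.
Proof.
move=> q0; case: n => [|n] // _. rewrite /Wn big_ord_recl /= expr0 mulr1 lerDl.
apply: sumr_ge0 => i _. by rewrite mulr_ge0 ?n2_ge0 ?exprn_ge0.
Qed.

Lemma size_1bX (b : CC) : (size ((1 - b%:P * 'X)%R : {poly CC}) <= 2)%N.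
Proof.
rewrite (leq_trans (size_polyD _ _)) // geq_max size_poly1 /= size_polyN.
rewrite (leq_trans (size_polyMleq _ _)) // size_polyX size_polyC. by case: (b != 0).
Qed.

Lemma coef0_1bX (b : CC) (T : {poly CC}) : ((1 - b%:P * 'X) * T)`_0 = T`_0.
Proof. by rewrite coef_1subX_mul /= mulr0 subr0. Qed.

Lemma size_Qm (zc : nat -> CC) m : size (\prod_(j < m) ('X - (zc j)%:P)) = m.+1.
Proof.
elim: m => [|m IH]; first by rewrite big_ord0 size_poly1.
rewrite big_ord_recr /= size_Mmonic ?monicXsubC // ?size_XsubC ?IH ?addn2 //.
by rewrite -size_poly_eq0 IH.
Qed.

Lemma circ_ind (q : Rdefinitions.R) (zc : nat -> CC) n : 0 < q -> forall m (T : {poly CC}),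
  (size T + m < n)%N ->
  n2 (T`_0) * \prod_(j < m) Rmax q (n2 (zc j)) <= Wn q n (T * \prod_(j < m) ('X - (zc j)%:P)).
Proof.
move=> q0; elim => [|m IH] T HT.
  rewrite !big_ord0 !mulr1. apply: Wn_ge_coef0; first exact: ltW.
  by move: HT; rewrite addn0; apply: leq_ltn_trans.
rewrite !big_ord_recr /=.
set Qm := \prod_(j < m) ('X - (zc j)%:P). set c := zc m.
have -> : T * (Qm * ('X - c%:P)) = ('X - c%:P) * (T * Qm) by ring.
have HS : (size (T * Qm)%R < n)%N.
{ apply: leq_ltn_trans (size_polyMleq _ _) _. rewrite size_Qm addnS /=. apply: ltn_trans HT. by rewrite addnS ltnS. }
have step : forall (b : CC) (M : Rdefinitions.R), 0 <= M ->
    Wn q n (('X - c%:P) * (T * Qm)) = M * Wn q n ((1 - b%:P * 'X) * (T * Qm)) ->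
    n2 (T`_0) * (\prod_(j < m) Rmax q (n2 (zc j)) * M) <= Wn q n (('X - c%:P) * (T * Qm)).
{ move=> b M M0 ->. rewrite mulrA [M * _]mulrC ler_wpM2r // mulrA.
  have := IH ((1 - b%:P * 'X) * T). rewrite coef0_1bX. apply.
  apply: leq_ltn_trans _ HT. rewrite addnS.
  apply: leq_trans (leq_add (size_polyMleq _ _) (leqnn m)) _.
  have := size_1bX b.
  case: (size (1 - b%:P * 'X)) => [|[|[|k]]] //= _; rewrite ?add1n ?add2n //.
  rewrite add0n; apply: leq_trans (leq_add (leq_pred _) (leqnn m)) _; exact: leqnSn. }
case: (Rle_dec (n2 c) q) => Hc.
- rewrite (Rmax_left q (n2 c) Hc). apply: (step _ q); [exact: ltW | exact: Wn_small].
- have Hc' : q < n2 c by apply/RltP; apply: Rnot_le_lt; exact: Hc.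
  rewrite Rmax_right; last by apply: Rlt_le; apply/RltP.
  have c0 : c != 0. { apply/eqP => E. move: Hc'. by rewrite E n2_0 ltNge ltW. }
  apply: step; first by rewrite n2_ge0. exact: Wn_big.
Qed.

Lemma A2 N a zs : List.length zs = N -> (forall z, peval N a z = Cprod_lin zs z) ->
  forall rho, Rlt 0 rho ->
  Rle (Rprod (fun i => Rmax rho (Cnorm2 (List.nth i zs C0))) N)
      (Rsum (fun j => Rmult (Cnorm2 (a j)) (pow rho j)) (S N)).
Proof.
move=> Hlen H rho Hrho. subst N. have q0 : 0 < rho by apply/RltP.
have Hs : (size (1%R : {poly CC}) + List.length zs < (List.length zs).+2)%N by rewrite size_poly1.
have := circ_ind (fun j => toC (List.nth j zs C0)) q0 Hs.
rewrite (_ : (1%R : {poly CC})`_0 = 1); last by rewrite coef1.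
rewrite n2_1 !mul1r -/(Qp zs) -(Pa_eq H).
move=> Hle; apply/RleP. rewrite Rprod_big Rsum_big.
have -> : \prod_(j < List.length zs) Rmax rho (Cnorm2 (List.nth j zs C0)) =
          \prod_(j < List.length zs) Rmax rho (n2 (toC (List.nth j zs C0))).
  by apply: eq_bigr => j _; rewrite n2_toC.
apply: (le_trans Hle). rewrite /Wn big_ord_recr /= coef_poly ltnn n2_0 mul0r addr0.
rewrite le_eqVlt; apply/orP; left; apply/eqP. apply: eq_bigr => j _. by rewrite coef_poly ltn_ord n2_toC RpowE.
Qed.


Close Scope ring_scope.
Open Scope R_scope.

Theorem theorem3p2
  (B : nat -> R) (HB : forall N : nat, 0 < B N)
  (p : nat -> (nat -> Cpx))
  (Hmonic : forall N : nat, monic_deg N (p N))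
  (Hmu : forall N : nat, mu_norm_le N (p N) (B N)) :
  forall (N : nat) (zs : list Cpx) (xs : list R3),
    roots_of N (p N) zs ->
    stereo_preimage zs xs ->
    E_log xs <= kappa * INR N ^ 2
                - INR N * ln (sqrt (INR N * (INR N + 1)) / 2)
                + INR N * ln (B N).
Proof.
move=> N zs xs [Hlen Hroots] Hpre.
apply: (assembly N (p N) (B N) zs xs (HB N) (Hmonic N) Hlen Hpre (Hmu N) Hroots).
- move=> i Hi. exact: (A1 Hlen Hroots Hi).
- move=> rho Hrho. exact: (A2 Hlen Hroots Hrho).
Qed.
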